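(* Let $(G,P)$ be a quasi-lattice ordered group and $\mathcal D$ the diagonal subalgebra of $\mathcal T(G,P)$. Then the commutant $\mathcal D'$ of $\mathcal D$ in $B(\ell^2(P))$ is contained in $\ell^\infty(P)$, i.e. every $M\in\mathcal D'$ is a multiplication operator $M_g$ for some $g\in\ell^\infty(P)$.
   Context: Quasi-lattice ordered group $(G,P)$: $G$ discrete, $P\subseteq G$ subsemigroup, $P\cap P^{-1}=\{e\}$, and for $x\le y\iff x^{-1}y\in P$ elements with a common upper bound in $P$ have a least one in $P$. On $\ell^2(P)$ with basis $\{\varepsilon_t\}_{t\in P}$, $T_s\varepsilon_t=\varepsilon_{st}$; $\mathcal T(G,P)$ is generated by the $T_s$, and $\mathcal D=\overline{\mathrm{span}}\{T_sT_s^*:s\in P\}$. $\ell^\infty(P)$ acts on $\ell^2(P)$ by multiplication operators $M_g\varepsilon_t=g(t)\varepsilon_t$. *)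

(* Defs.v *)
From mathcomp Require Import all_boot all_algebra.
From mathcomp Require Import all_classical all_reals all_analysis.
From mathcomp Require Import complex.
Import GRing.Theory Num.Theory.
Local Open Scope ring_scope.

Set Implicit Arguments.
Unset Strict Implicit.
Unset Printing Implicit Defensive.

Record group_on (G : Type) := GroupOn {
  gmul : G -> G -> G;
  ginv : G -> G;
  gone : G;
  gmulA : forall x y z, gmul x (gmul y z) = gmul (gmul x y) z;
  gmul1g : forall x, gmul gone x = x;
  gmulVg : forall x, gmul (ginv x) x = gone }.

Section QLO.
Variables (G : choiceType) (grp : group_on G) (P : set G).

Definition qle (x y : G) : Prop := P (gmul grp (ginv grp x) y).

Definition quasi_lattice_ordered : Prop :=
  [/\ (forall x y, P x -> P y -> P (gmul grp x y)),
      P (gone grp),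
      (forall x, P x -> P (ginv grp x) -> x = gone grp)
    & (forall x y, (exists z, P z /\ qle x z /\ qle y z) ->
         exists w, [/\ P w, qle x w, qle y w &
           forall z, P z -> qle x z -> qle y z -> qle w z])].
End QLO.

Section Hilbert.
Variables (R : realType) (G : choiceType) (grp : group_on G) (P : set G).

Local Notation C := (R[i]).
Local Notation vec := (G -> C).
Local Notation op := (vec -> vec).

Definition cabs (z : C) : R := Num.sqrt (complex.Re z ^+ 2 + complex.Im z ^+ 2).

Definition nrm2 (f : vec) : \bar R := (\esum_(t in P) ((cabs (f t)) ^+ 2)%:E)%E.

(** f \in l^2(P): f vanishes off P and is square summable over P
    (so l^2(P) is realised inside the functions G -> C). *)
Definition l2 (f : vec) : Prop :=
  (forall t, ~ P t -> f t = 0) /\ (nrm2 f < +oo)%E.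

Definition bounded_op (A : op) : Prop :=
  [/\ (forall f h, l2 f -> l2 h -> A (fun t => f t + h t) = (fun t => A f t + A h t)),
      (forall (c : C) f, l2 f -> A (fun t => c * f t) = (fun t => c * A f t))
    & exists k : R, forall f, l2 f -> l2 (A f) /\ (nrm2 (A f) <= k%:E * nrm2 f)%E].

(** isometry T_s : eps_t |-> eps_{st}, i.e. (T_s f)(x) = f(s^{-1} x) if s^{-1}x \in P *)
Definition Tshift (s : G) : op := fun f x =>
  if asbool (P (gmul grp (ginv grp s) x)) then f (gmul grp (ginv grp s) x) else 0.

Definition Tadj (s : G) : op := fun f x =>
  if asbool (P x) then f (gmul grp s x) else 0.

Definition rproj (s : G) : op := fun f => Tshift s (Tadj s f).

Definition dcomb (l : seq (C * G)) : op := fun f x =>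
  \sum_(p <- l) p.1 * rproj p.2 f x.

(** membership in D = closed linear span of {T_s T_s^* : s \in P}
    (closure in operator norm) *)
Definition in_diag (X : op) : Prop :=
  bounded_op X /\
  forall eps : R, 0 < eps -> exists l : seq (C * G),
    (forall p, p \in l -> P p.2) /\
    forall f, l2 f -> (nrm2 (fun t => (X f t - dcomb l f t)%R) <= eps%:E * nrm2 f)%E.

Definition in_commutant_diag (M : op) : Prop :=
  bounded_op M /\ forall X, in_diag X -> forall f, l2 f -> M (X f) = X (M f).

Definition is_mult_op (M : op) : Prop :=
  exists g : vec, (exists B : R, forall t, P t -> cabs (g t) <= B) /\
    forall f, l2 f -> M f = (fun t => g t * f t).

End Hilbert.

(* Main.v *)
Require Import Defs.
From mathcomp Require Import all_boot all_algebra.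
From mathcomp Require Import all_classical all_reals all_analysis.
From mathcomp Require Import complex.
From mathcomp Require Import lra.
Import mathcomp.order.order.Order.TTheory GRing.Theory Num.Theory.
Local Open Scope classical_set_scope.
Local Open Scope ring_scope.
Set Implicit Arguments.
Unset Strict Implicit.

Lemma gmulgV (G : Type) (grp : group_on G) x :
  gmul grp x (ginv grp x) = gone grp.
Proof.
set y := ginv grp x.
rewrite -[gmul grp x y](gmul1g grp) -{1}(gmulVg grp y) -gmulA.
rewrite [gmul grp y (gmul grp x y)]gmulA gmulVg gmul1g.
exact: gmulVg.
Qed.

Lemma gmulg1 (G : Type) (grp : group_on G) x : gmul grp x (gone grp) = x.
Proof. by rewrite -(gmulVg grp x) gmulA gmulgV gmul1g. Qed.

Lemma gmulKV (G : Type) (grp : group_on G) x y :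
  gmul grp x (gmul grp (ginv grp x) y) = y.
Proof. by rewrite gmulA gmulgV gmul1g. Qed.

Lemma gmulK (G : Type) (grp : group_on G) x y :
  gmul grp (ginv grp x) (gmul grp x y) = y.
Proof. by rewrite gmulA gmulVg gmul1g. Qed.

Lemma ginv_uniq (G : Type) (grp : group_on G) p q :
  gmul grp p q = gone grp -> q = ginv grp p.
Proof. by move=> h; rewrite -(@gmulK _ grp p q) h gmulg1. Qed.

Definition maskb (R : realType) (G : Type) (q : G -> bool) (f : G -> R[i]) : G -> R[i] :=
  fun x => if q x then f x else 0.

Lemma cabs0 (R : realType) : cabs (0 : R[i]) = 0.
Proof. by rewrite /cabs /= expr0n /= addr0 sqrtr0. Qed.

Lemma cabs_ge0 (R : realType) (z : R[i]) : 0 <= cabs z.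
Proof. exact: sqrtr_ge0. Qed.

Lemma cabs_eq0 (R : realType) (z : R[i]) : cabs z = 0 -> z = 0.
Proof.
rewrite /cabs => /eqP; rewrite sqrtr_eq0 => h.
case: z h => a b /= h.
have ha : a ^+ 2 = 0 by apply/eqP; rewrite eq_le sqr_ge0 andbT; nra.
have hb : b ^+ 2 = 0 by apply/eqP; rewrite eq_le sqr_ge0 andbT; nra.
by move/eqP: ha; rewrite sqrf_eq0 => /eqP->; move/eqP: hb; rewrite sqrf_eq0 => /eqP->.
Qed.

Lemma l2mask (R : realType) (G : choiceType) (P : set G) (q : G -> bool) (f : G -> R[i]) :
  l2 P f -> l2 P (maskb q f) /\ (nrm2 P (maskb q f) <= nrm2 P f)%E.
Proof.
move=> [f0 fn].
have le : (nrm2 P (maskb q f) <= nrm2 P f)%E.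
  apply: le_esum => x _; rewrite lee_fin /maskb; case: (q x) => //.
  by rewrite cabs0 expr0n /= sqr_ge0.
split=> //; split; last exact: le_lt_trans fn.
by move=> t Pt; rewrite /maskb f0 //; case: (q t).
Qed.

Lemma nrm2_0 (R : realType) (G : choiceType) (P : set G) :
  nrm2 P (fun _ : G => (0 : R[i])) = 0%E.
Proof. by apply: esum1 => i _; rewrite cabs0 expr0n. Qed.

Lemma l2_0 (R : realType) (G : choiceType) (P : set G) :
  l2 P (fun _ : G => (0 : R[i])).
Proof. by split=> //; rewrite nrm2_0 ltry. Qed.

Lemma nrm2_ge0 (R : realType) (G : choiceType) (P : set G) (f : G -> R[i]) :
  (0 <= nrm2 P f)%E.
Proof. by apply: esum_ge0 => x _; rewrite lee_fin sqr_ge0. Qed.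

Lemma le_term (R : realType) (G : choiceType) (P : set G) (f : G -> R[i]) t :
  P t -> ((cabs (f t) ^+ 2)%:E <= nrm2 P f)%E.
Proof.
move=> Pt; apply: esum_ge; exists [set t].
  by split; [exact: finite_set1 | move=> x ->].
by rewrite fsbig_set1.
Qed.

Lemma nrm2_fin (R : realType) (G : choiceType) (P : set G) (f : G -> R[i]) :
  l2 P f -> nrm2 P f = (fine (nrm2 P f))%:E /\ 0 <= fine (nrm2 P f).
Proof.
move=> [_ fn]; have h0 := nrm2_ge0 P f.
have hf : nrm2 P f \is a fin_num by rewrite ge0_fin_numE.
by rewrite fineK //; split => //; rewrite fine_ge0.
Qed.

Lemma tail (R : realType) (G : choiceType) (P : set G) (u : G -> R[i]) :
  l2 P u -> forall eps : R, 0 < eps ->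
  exists s : seq G, (nrm2 P (maskb (fun x => x \notin s) u) <= eps%:E)%E.
Proof.
move=> hu eps e0.
have [hn hr] := nrm2_fin hu; set r := fine (nrm2 P u) in hn hr.
set a := fun x => ((cabs (u x))^+2)%:E.
have h1 : ((r - eps)%:E < \esum_(t in P) a t)%E.
  by rewrite [X in (_ < X)%E](_ : _ = nrm2 P u)// hn lte_fin; lra.
move/ereal_sup_gt: h1 => [y [A [finA AP] <-] hy].
have [s As] := (iffLR (finite_seqP A) finA).
exists s.
set b := fun x => if x \in s then 0%E else a x.
set c := fun x => if x \in s then a x else 0%E.
have a0 : forall x, (0 <= a x)%E by move=> x; rewrite lee_fin sqr_ge0.
have E1 : nrm2 P (maskb (fun x => x \notin s) u) = \esum_(t in P) b t.
  apply: eq_esum => x _; rewrite /maskb /b; case: (x \in s) => //=.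
  by rewrite cabs0 expr0n.
have E2 : (\esum_(t in P) a t = \esum_(t in P) c t + \esum_(t in P) b t)%E.
  rewrite -esumD; last 2 first.
  - by move=> x _; rewrite /c; case: (x \in s).
  - by move=> x _; rewrite /b; case: (x \in s).
  by apply: eq_esum => x _; rewrite /b /c; case: (x \in s); rewrite ?adde0 ?add0e.
have E3 : (\sum_(x \in A) a x <= \esum_(t in P) c t)%E.
  apply: esum_ge; exists A => //.
  rewrite le_eqVlt; apply/orP; left; apply/eqP.
  apply: eq_fsbigr => x; rewrite inE As /c /= => ->.
  done.
have : (\esum_(t in P) c t + \esum_(t in P) b t) \is a fin_num.
  by rewrite -E2 [X in X \is a fin_num](_ : _ = nrm2 P u)// hn.
rewrite fin_numD => /andP [fc fb].
rewrite E1 -(fineK fb).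
have hc := lt_le_trans hy E3; rewrite -(fineK fc) lte_fin in hc.
have : r%:E = ((fine (\esum_(t in P) c t)) + fine (\esum_(t in P) b t))%:E.
  by rewrite EFinD (fineK fc) (fineK fb) -E2 -hn.
move=> /eqP; rewrite eqe => /eqP hrr.
rewrite lee_fin; lra.
Qed.

Lemma rprojE (R : realType) (G : choiceType) (grp : group_on G) (P : set G) s
  (f : G -> R[i]) :
  rproj grp P s f = maskb (fun x => asbool (P (gmul grp (ginv grp s) x))) f.
Proof.
apply/funext => x; rewrite /rproj /Tshift /Tadj /maskb.
by case: asboolP => // _; rewrite gmulKV.
Qed.

Lemma rproj_diag (R : realType) (G : choiceType) (grp : group_on G) (P : set G) s (Ps : P s) :
  @in_diag R G grp P (rproj grp P s).
Proof.
split.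
  split.
  - move=> f h _ _; rewrite !rprojE; apply/funext => x; rewrite /maskb.
    by case: ifP => //; rewrite addr0.
  - move=> c f _; rewrite !rprojE; apply/funext => x; rewrite /maskb.
    by case: ifP => //; rewrite mulr0.
  - exists 1 => f hf; rewrite rprojE; have [h1 h2] := l2mask (fun x => asbool (P (gmul grp (ginv grp s) x))) hf.
    by split => //; rewrite mul1e.
move=> eps e0; exists [:: (1, s)]; split.
  by move=> p; rewrite inE => /eqP ->.
move=> f hf.
rewrite (_ : (fun t => _) = fun _ => 0).
  by rewrite nrm2_0; apply: mule_ge0; [rewrite lee_fin ltW | exact: nrm2_ge0].
by apply/funext => t; rewrite /dcomb big_seq1 /= mul1r subrr.
Qed.

Lemma arith (R : realType) (c2 k rv d kn c22 : R) : c2 <= k*rv -> rv <= d ->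
  k <= kn -> 0 <= kn -> (kn+1)*d = c22 -> c2 = 2*c22 -> 0 <= rv -> 0 < c2 -> False.
Proof. move=> *; nra. Qed.

Lemma arith2 (R : realType) (c k : R) : c ^+ 2 <= k -> k <= `|k| -> 0 <= c -> c <= `|k| + 1.
Proof. move=> h1 h2 h3; have := normr_ge0 k; set kn := `|k| in h2 *; move=> h4; nra. Qed.

Unset Implicit Arguments.

Theorem lemma6p11 (R : realType) (G : choiceType) (grp : group_on G) (P : set G)
  (hP : quasi_lattice_ordered grp P) (M : (G -> R[i]) -> (G -> R[i])) :
  in_commutant_diag grp P M -> is_mult_op P M.
Proof.
move=> [[Madd Mscal [k Mb]] Mcomm].
case: hP => Psg Pe Panti _.
pose e (t : G) : G -> R[i] := fun x => if x == t then 1 else 0.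
have M0 : M (fun _ => 0) = fun _ => 0.
  transitivity (M (fun _ : G => 0 * 0)); first by congr M; apply/funext => x; rewrite mulr0.
  rewrite Mscal; [by apply/funext => x; rewrite mul0r | exact: l2_0].
have comm : forall s, P s -> forall f, l2 P f ->
    M (maskb (fun x => asbool (P (gmul grp (ginv grp s) x))) f) =
    maskb (fun x => asbool (P (gmul grp (ginv grp s) x))) (M f).
  move=> s Ps f hf; rewrite -!rprojE; exact: Mcomm (rproj_diag R grp Ps) f hf.
have el2 : forall t, P t -> l2 P (e t) /\ nrm2 P (e t) = 1%E.
  move=> t Pt.
  have hn : nrm2 P (e t) = 1%E.
    rewrite /nrm2 (esumID [set t]); last by move=> i _; rewrite lee_fin sqr_ge0.
    rewrite (_ : P `&` [set t] = [set t]); last by apply/seteqP; split => x /=; [case | move=> xt; split => //; rewrite xt].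
    rewrite esum_set1; last by rewrite lee_fin sqr_ge0.
    rewrite esum1 ?adde0; last by move=> i [_ /eqP hi]; rewrite /e (negbTE hi) cabs0 expr0n.
    rewrite /e eqxx /cabs /= expr0n /= addr0 expr1n sqrtr1 expr1n //.
  split => //; split; last by rewrite hn ltry.
  by move=> x Px; rewrite /e; case: eqP => // xt; rewrite xt in Px.
have A : forall t, P t -> forall x, x != t -> M (e t) x = 0.
  move=> t Pt x xt.
  have hl := (el2 t Pt).1.
  case: (pselect (P (gmul grp (ginv grp t) x))) => hx.
  - have Px : P x by rewrite -(gmulKV grp t x); apply: Psg.
    have := comm x Px (e t) hl.
    rewrite (_ : maskb _ (e t) = fun _ => 0); last first.
      apply/funext => y; rewrite /maskb /e; case: asboolP => // hy; case: eqP => // yt.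
      exfalso; subst y.
      have pq : gmul grp (gmul grp (ginv grp t) x) (gmul grp (ginv grp x) t) = gone grp.
        by rewrite -gmulA gmulKV gmulVg.
      rewrite (ginv_uniq pq) in hy.
      have pe := Panti _ hx hy.
      by apply: (negP xt); apply/eqP; rewrite -(gmulKV grp t x) pe gmulg1.
    rewrite M0 => /(congr1 (fun f => f x)); rewrite /maskb gmulVg.
    by case: asboolP.
  - have := comm t Pt (e t) hl.
    rewrite (_ : maskb _ (e t) = e t); last first.
      apply/funext => y; rewrite /maskb /e; case: asboolP => // hy; case: eqP => // yt.
      by subst y; case: hy; rewrite gmulVg.
    move/(congr1 (fun f => f x)) => /=; rewrite /maskb; case: asboolP => //.
have B : forall t, P t -> forall s : seq G, forall u, l2 P u -> u t = 0 ->
    M (maskb (fun x => x \in s) u) t = 0.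
  move=> t Pt; elim => [|a s IH] u hu ut.
    rewrite (_ : maskb _ u = fun _ => 0) ?M0 //.
  have dec : maskb (fun x => x \in a :: s) u = fun x => maskb (fun x => x == a) u x
       + maskb (fun x => x \in s) (maskb (fun x => x != a) u) x.
    apply/funext => x; rewrite /maskb inE.
    case: (eqVneq x a) => [->|xa] /=.
      by case: (a \in s); rewrite addr0.
    by rewrite add0r; case: (x \in s).
  have h1 := (l2mask (fun x => x == a) hu).1.
  have h2 := (l2mask (fun x => x != a) hu).1.
  have h3 := (l2mask (fun x => x \in s) h2).1.
  rewrite dec (Madd _ _ h1 h3) /=.
  rewrite IH //; last by rewrite /maskb ut; case: (t != a).
  rewrite addr0.
  case: (eqVneq a t) => [at_|ant].
    rewrite (_ : maskb _ u = fun _ => 0) ?M0 //; apply/funext => x; rewrite /maskb.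
    by case: eqP => // ->; rewrite at_.
  case: (pselect (P a)) => Pa.
    rewrite (_ : maskb _ u = fun x => u a * e a x); last first.
      by apply/funext=> x; rewrite /maskb /e; case: eqP => [->|_]; rewrite ?mulr1 ?mulr0.
    rewrite Mscal; last exact: (el2 a Pa).1.
    by rewrite /= A ?mulr0 // eq_sym.
  rewrite (_ : maskb _ u = fun _ => 0) ?M0 //; apply/funext => x; rewrite /maskb.
  by case: eqP => // ->; exact: hu.1 a Pa.
have D : forall t, P t -> forall u, l2 P u -> u t = 0 -> M u t = 0.
  move=> t Pt u hu ut.
  apply: cabs_eq0.
  suff h : cabs (M u t) ^+ 2 <= 0.
    have h0 := sqr_ge0 (cabs (M u t)).
    by apply/eqP; rewrite -sqrf_eq0 eq_le h h0.
  rewrite leNgt; apply/negP => hpos.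
  set c2 := cabs (M u t) ^+ 2 in hpos *.
  have hK : 0 < `|k| + 1 by rewrite ltr_pwDr // normr_ge0.
  have [s hs] := tail hu (divr_gt0 (divr_gt0 hpos (ltr0n _ 2)) hK).
  set v := maskb (fun x => x \notin s) u.
  have h1 := (l2mask (fun x => x \in s) hu).1.
  have hv := (l2mask (fun x => x \notin s) hu).1.
  have dec : u = fun x => maskb (fun x => x \in s) u x + v x.
    by apply/funext => x; rewrite /v /maskb; case: (x \in s); rewrite ?addr0 ?add0r.
  have hM : M u t = M v t.
    by rewrite [in LHS]dec (Madd _ _ h1 hv) /= B // add0r.
  have [lMv hb] := Mb v hv.
  have := le_trans (le_term (M v) Pt) hb.
  have [hn hr] := nrm2_fin hv.
  rewrite hn -EFinM lee_fin -hM -/c2 => hc.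
  rewrite hn lee_fin in hs.
  set rv := fine (nrm2 P v) in hr hs hc.
  set d := c2 / 2%:R / (`|k| + 1) in hs.
  have hd : (`|k| + 1) * d = c2 / 2%:R by rewrite /d mulrC divfK // gt_eqF.
  have kk := ler_norm k; have k0 := normr_ge0 k.
  set kn := `|k| in hK hd kk k0.
  set c22 := c2 / 2%:R in hd.
  have hc22 : c2 = 2 * c22 by rewrite /c22 mulrC divfK // pnatr_eq0.
  exact: (arith hc hs kk k0 hd hc22 hr hpos).
exists (fun t => M (e t) t); split.
  exists (`|k| + 1) => t Pt.
  have [l2t n1] := el2 t Pt.
  have [_ hb] := Mb _ l2t.
  have := le_trans (le_term (M (e t)) Pt) hb.
  rewrite n1 mule1 lee_fin => h.
  have := cabs_ge0 (M (e t) t); have := ler_norm k.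
  exact: arith2.
move=> f hf; apply/funext => t.
case: (pselect (P t)) => Pt; last first.
  by rewrite (hf.1 t Pt) mulr0; exact: (Mb f hf).1.1 t Pt.
have h1 := (l2mask (fun x => x == t) hf).1.
have h2 := (l2mask (fun x => x != t) hf).1.
have -> : M f = M (fun x => maskb (fun x => x == t) f x + maskb (fun x => x != t) f x).
  by congr M; apply/funext => x; rewrite /maskb; case: eqP => _ /=; rewrite ?addr0 ?add0r.
rewrite (Madd _ _ h1 h2) /= (D t Pt _ h2); last by rewrite /maskb eqxx.
rewrite (_ : maskb _ f = fun x => f t * e t x); last first.
  by apply/funext=> x; rewrite /maskb /e; case: eqP => [->|_]; rewrite ?mulr1 ?mulr0.
rewrite Mscal; last exact: (el2 t Pt).1.
by rewrite /= addr0 mulrC.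
Qed.
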